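(* For every $n\in\mathbb{N}$, $\beta>0$, $\lambda$ with $n>\lambda\ge 2\log\frac{2}{\beta}$, and $x\in\{0,1\}^n$, \[ \Pr\left[\left|P_{n,\lambda}(x)-\sum_{i=1}^n x_i\right|>\sqrt{2\lambda\log(2/\beta)}\cdot\frac{n}{n-\lambda}\right]\le\beta. \]
   Context: $P_{n,\lambda}(x)$ denotes the output of the bit-sum protocol: each of $n$ users with $x_i\in\{0,1\}$ independently draws $b\sim\mathrm{Ber}(\lambda/n)$ and sends $y_i=x_i$ if $b=0$ and a fresh $\mathrm{Ber}(1/2)$ bit if $b=1$; the messages are shuffled uniformly at random; the analyzer outputs $\frac{n}{n-\lambda}\left(\sum_{i=1}^n y_i-\frac{\lambda}{2}\right)$. $\log$ is the natural logarithm. *)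

(* Defs.v *)
From HB Require Import structures.
From mathcomp Require Import all_boot all_order all_algebra all_fingroup.
From mathcomp Require Import all_classical all_reals all_analysis.
Set Implicit Arguments. Unset Strict Implicit. Unset Printing Implicit Defensive.
Import Order.TTheory GRing.Theory Num.Theory.
Local Open Scope ring_scope.

Section BitSum.
Variable R : realType.

Definition ber (p : R) (b : bool) : R := if b then p else 1 - p.

(* Per-user randomness: (b, c) with b ~ Ber(lambda/n) and c ~ Ber(1/2) the
   fresh bit; the shuffle is a uniformly random permutation of 'I_n. *)
Definition outcome (n : nat) : finType :=
  ({ffun 'I_n -> bool * bool} * {perm 'I_n})%type.

Definition weight (n : nat) (lambda : R) (w : outcome n) : R :=
  (\prod_(i < n) (ber (lambda / n%:R) (w.1 i).1 * ber (1/2) (w.1 i).2))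
  * (#|{perm 'I_n}|%:R)^-1.

Definition message (n : nat) (x : 'I_n -> bool) (w : outcome n) (i : 'I_n)
  : bool := if (w.1 i).1 then (w.1 i).2 else x i.

Definition shuffled (n : nat) (x : 'I_n -> bool) (w : outcome n) (j : 'I_n)
  : bool := message x w (w.2 j).

Definition bitsum_output (n : nat) (lambda : R) (x : 'I_n -> bool)
  (w : outcome n) : R :=
  n%:R / (n%:R - lambda) *
  ((\sum_(j < n) ((shuffled x w j : nat)%:R)) - lambda / 2).

Definition prob (n : nat) (lambda : R) (E : pred (outcome n)) : R :=
  \sum_(w : outcome n | E w) weight lambda w.

End BitSum.

(* Main.v *)
Require Import Defs.
From HB Require Import structures.
From mathcomp Require Import all_boot all_order all_algebra all_fingroup.
From mathcomp Require Import all_classical all_reals all_analysis.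
From mathcomp Require Import ring lra.
Import Order.TTheory GRing.Theory Num.Theory.
Local Open Scope ring_scope.


Lemma kmono (R : realType) (t : R) : -1 <= t <= 0 -> 1 <= expR t * (1 - t + t ^+ 2).
Proof.
move=> /andP[t1 t0].
pose k := fun t : R => expR t * (1 - t + t ^+ 2).
have dk : forall x : R, is_derive x 1 k (expR x * (x * (1 + x))).
  move=> x; rewrite /k.
  apply: is_derive_eq.
  rewrite /GRing.scale /= !mulr1; lra.
suff : k 0 <= k t.
  by rewrite /k expR0 mul1r expr0n /= subr0 addr0.
apply: (@ler0_derive1_nincr R k (-1) 0) => //.
- move=> x; rewrite in_itv /= => /andP[x1 x0].
  rewrite derive1E derive_val.
  rewrite pmulr_rle0 ?expR_gt0 //. nra.
- apply: derivable_within_continuous => x _; exact: ex_derive.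
Qed.


Lemma exp_quad (R : realType) (s : R) : -1 <= s <= 1 -> expR s - 1 - s <= s ^+ 2.
Proof.
move=> /andP[s1 s2].
have [s0|s0] := leP 0 s.
  have := @kmono R (- s).
  rewrite sqrrN opprK.
  move=> H; have {}H := H ltac:(apply/andP; split; lra).
  have e : expR s * expR (- s) = 1 by rewrite expRxMexpNx_1.
  have e0 := expR_gt0 s.
  have : expR s <= expR s * (expR (-s) * (1 + s + s ^+ 2)).
    by rewrite -{1}(mulr1 (expR s)) ler_wpM2l // ltW.
  rewrite mulrA e mul1r; lra.
have H := expR_ge1Dx (- s).
have e : expR s * expR (- s) = 1 by rewrite expRxMexpNx_1.
have e0 := expR_gt0 s.
nra.
Qed.

Definition hq {R : realType} (p : R) (xi : bool) (v : bool * bool) : R :=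
  ((if v.1 then v.2 else xi) : nat)%:R - (p / 2 + (1 - p) * (xi : nat)%:R).


Lemma step3 (R : realType) (p s : R) (xi : bool) : 0 <= p <= 1 -> -1 <= s <= 1 ->
  \sum_(v : bool * bool) (ber p v.1 * ber (1/2) v.2 * expR (s * hq p xi v))
  <= expR (p / 2 * s ^+ 2).
Proof.
move=> /andP[p0 p1] sb.
rewrite -(pair_bigA _ (fun b c => ber p b * ber (1/2) c * expR (s * hq p xi (b, c)))) /= !big_bool /= /hq /ber /=.
case: xi => /=.
- rewrite mulr1 !mulr1n mulr0n.
  set C := expR (s * (1 - (p / 2 + (1 - p)))).
  have eC : expR (s * (0 - (p / 2 + (1 - p)))) = C * expR (- s).
    by rewrite /C -expRD; congr expR; lra.
  rewrite eC.
  have hC : C = expR (p / 2 * s) by rewrite /C; congr expR; lra.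
  have h1 := expR_ge1Dx (p / 2 * (expR (- s) - 1)).
  have h2 := @exp_quad R (- s) ltac:(move: sb => /andP[? ?]; apply/andP; split; lra).
  apply: (@le_trans _ _ (C * expR (p / 2 * (expR (- s) - 1)))).
    have C0 : 0 <= C by rewrite /C expR_ge0.
    have -> : p * (1 / 2) * C + p * (1 - 1 / 2) * (C * expR (- s)) +
     ((1 - p) * (1 / 2) * C + (1 - p) * (1 - 1 / 2) * C)
     = C * (1 + p / 2 * (expR (- s) - 1)) by field.
    by rewrite ler_wpM2l.
  rewrite hC -expRD ler_expR.
  rewrite sqrrN in h2.
  have : p / 2 * (expR (- s) - 1 + s) <= p / 2 * s ^+ 2.
    by rewrite ler_wpM2l //; [lra | lra].
  lra.
- rewrite mulr0 !mulr1n mulr0n !addr0.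
  set B := expR (s * (0 - p / 2)).
  have eC : expR (s * (1 - p / 2)) = expR s * B.
    by rewrite /B -expRD; congr expR; lra.
  rewrite eC.
  have hB : B = expR (- (p / 2 * s)) by rewrite /B; congr expR; lra.
  have h1 := expR_ge1Dx (p / 2 * (expR s - 1)).
  have h2 := @exp_quad R s sb.
  apply: (@le_trans _ _ (B * expR (p / 2 * (expR s - 1)))).
    have B0 : 0 <= B by rewrite /B expR_ge0.
    have -> : p * (1 / 2) * (expR s * B) + p * (1 - 1 / 2) * B +
     ((1 - p) * (1 / 2) * B + (1 - p) * (1 - 1 / 2) * B)
     = B * (1 + p / 2 * (expR s - 1)) by field.
    by rewrite ler_wpM2l.
  rewrite hB -expRD ler_expR.
  have : p / 2 * (expR s - 1 - s) <= p / 2 * s ^+ 2.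
    by rewrite ler_wpM2l //; lra.
  lra.
Qed.


Lemma sum_outcome (R : realType) (n : nat) (lambda : R)
  (F : {ffun 'I_n -> bool * bool} -> R) :
  \sum_(w : outcome n) weight lambda w * F w.1 =
  \sum_(g : {ffun 'I_n -> bool * bool})
     (\prod_(i < n) (ber (lambda / n%:R) (g i).1 * ber (1/2) (g i).2)) * F g.
Proof.
rewrite -(pair_bigA _ (fun g s => weight lambda (g, s) * F g)) /=.
apply: eq_bigr => g _.
rewrite /weight.
rewrite (eq_bigr (fun _ => (\prod_(i < n) (ber (lambda / n%:R) (g i).1 * ber (1/2) (g i).2)) * F g * (#|{perm 'I_n}|%:R)^-1)); last first.
  by move=> s _; rewrite mulrAC.
rewrite sumr_const.
have -> : #|{perm 'I_n}| = n`! by apply: card_Sn.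
have hf : (n`!%:R : R) != 0 by rewrite pnatr_eq0 gtn_eqF // fact_gt0.
by rewrite -(mulr_natr (_ * F g * _) n`!) -(mulrA (_ * F g)) mulVf // mulr1.
Qed.

Lemma ber_ge0 (R : realType) (p : R) b : 0 <= p <= 1 -> 0 <= ber p b.
Proof. by move=> /andP[? ?]; rewrite /ber; case: b => //; lra. Qed.

Lemma mgf (R : realType) (n : nat) (lambda s : R) (x : 'I_n -> bool) :
  (0 < n)%N -> 0 <= lambda <= n%:R -> -1 <= s <= 1 ->
  \sum_(g : {ffun 'I_n -> bool * bool})
     (\prod_(i < n) (ber (lambda / n%:R) (g i).1 * ber (1/2) (g i).2)) *
     expR (s * \sum_(i < n) hq (lambda / n%:R) (x i) (g i))
  <= expR (lambda / 2 * s ^+ 2).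
Proof.
move=> n0 /andP[l0 ln] sb.
have nR : (0 : R) < n%:R by rewrite ltr0n.
have hp : 0 <= lambda / n%:R <= 1.
  apply/andP; split; first by rewrite divr_ge0 // ltW.
  by rewrite ler_pdivrMr // mul1r.
under eq_bigr do rewrite mulr_sumr expR_sum -big_split /=.
rewrite -(bigA_distr_bigA (fun i v => ber (lambda / n%:R) v.1 * ber (1/2) v.2 * expR (s * hq (lambda / n%:R) (x i) v))) /=.
apply: (@le_trans _ _ (\prod_(i < n) expR (lambda / n%:R / 2 * s ^+ 2))).
  apply: ler_prod => i _; apply/andP; split.
    apply: sumr_ge0 => v _; rewrite mulr_ge0 ?expR_ge0 // mulr_ge0 // ber_ge0 //.
    apply/andP; split; lra.
  exact: step3.
rewrite prodr_const card_ord -expRM_natl.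
have -> : n%:R * (lambda / n%:R / 2 * s ^+ 2) = lambda / 2 * s ^+ 2.
  by field; rewrite gt_eqF.
by [].
Qed.

Lemma out_eq (R : realType) (n : nat) (lambda : R) (x : 'I_n -> bool)
  (w : outcome n) : (0 < n)%N -> lambda < n%:R ->
  bitsum_output lambda x w - \sum_(i < n) ((x i : nat)%:R) =
  n%:R / (n%:R - lambda) * \sum_(i < n) hq (lambda / n%:R) (x i) (w.1 i).
Proof.
move=> n0 ln.
have nR : (n%:R : R) != 0 by rewrite pnatr_eq0 -lt0n.
have nl : (n%:R - lambda : R) != 0 by rewrite subr_eq0 gt_eqF.
rewrite /bitsum_output /shuffled.
have -> : \sum_(j < n) ((message x w (w.2 j) : nat)%:R : R) =
          \sum_(i < n) ((message x w i : nat)%:R : R).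
  by rewrite [RHS](reindex_inj (@perm_inj _ w.2)).
rewrite /hq sumrB big_split /= sumr_const card_ord -mulr_sumr /message.
set S := \sum_(i < n) _.
set X := \sum_(i < n) _.
rewrite -[(lambda / n%:R / 2) *+ n]mulr_natr.
field.
by rewrite nR nl.
Qed.

Lemma weight_ge0 (R : realType) (n : nat) (lambda : R) (w : outcome n) :
  0 <= lambda <= n%:R -> 0 <= weight lambda w.
Proof.
move=> /andP[l0 ln].
have hp : 0 <= lambda / n%:R <= 1.
  case: n w ln => [|n] w ln.
    by rewrite invr0 mulr0 lexx ler01.
  apply/andP; split; first by rewrite divr_ge0.
  by rewrite ler_pdivrMr ?ltr0Sn // mul1r.
rewrite /weight mulr_ge0 ?invr_ge0 ?ler0n //.
apply: prodr_ge0 => i _; rewrite mulr_ge0 // ber_ge0 //.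
apply/andP; split; lra.
Qed.

Lemma one_side (R : realType) (n : nat) (lambda s u : R) (x : 'I_n -> bool) :
  (0 < n)%N -> 0 <= lambda <= n%:R -> -1 <= s <= 1 ->
  \sum_(w : outcome n) weight lambda w *
     expR (s * \sum_(i < n) hq (lambda / n%:R) (x i) (w.1 i) - u)
  <= expR (- u) * expR (lambda / 2 * s ^+ 2).
Proof.
move=> n0 hl sb.
under eq_bigr do rewrite expRD mulrA.
rewrite -mulr_suml (@sum_outcome R n lambda (fun g => expR (s * \sum_(i < n) hq (lambda / n%:R) (x i) (g i)))).
by rewrite mulrC ler_wpM2l ?expR_ge0 // mgf.
Qed.

Theorem theorem4p11 (R : realType) (n : nat) (beta lambda : R)
  (x : 'I_n -> bool) :
  0 < beta -> 0 <= lambda -> lambda < n%:R ->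
  2 * ln (2 / beta) <= lambda ->
  prob lambda (fun w : outcome n =>
    Num.sqrt (2 * lambda * ln (2 / beta)) * (n%:R / (n%:R - lambda))
    < `| bitsum_output lambda x w - \sum_(i < n) ((x i : nat)%:R) |)
  <= beta.
Proof.
move=> b0 l0 hln hL.
have n0 : (0 < n)%N.
  rewrite lt0n; apply/eqP => e; move: hln; rewrite e => hln.
  have : (0%:R : R) = 0 by [].
  lra.
have nR : (0 : R) < n%:R by rewrite ltr0n.
have hl : 0 <= lambda <= n%:R by apply/andP; split; lra.
set L := ln (2 / beta).
set t := Num.sqrt (2 * lambda * L).
set c := n%:R / (n%:R - lambda).
have c0 : 0 < c by rewrite /c divr_gt0 // subr_gt0.
set D := fun g : {ffun 'I_n -> bool * bool} =>
  \sum_(i < n) hq (lambda / n%:R) (x i) (g i).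
have key : forall r : R, 0 <= r <= 1 ->
  prob lambda (fun w : outcome n =>
    t * c < `| bitsum_output lambda x w - \sum_(i < n) ((x i : nat)%:R) |)
  <= expR (- (r * t)) * expR (lambda / 2 * r ^+ 2) +
     expR (- (r * t)) * expR (lambda / 2 * (- r) ^+ 2).
  move=> r /andP[r0 r1].
  rewrite /prob big_mkcond /=.
  apply: (@le_trans _ _ (\sum_(w : outcome n) (weight lambda w *
      expR (r * D w.1 - r * t) + weight lambda w * expR (- r * D w.1 - r * t)))).
    apply: ler_sum => w _.
    have w0 := @weight_ge0 R n lambda w hl.
    case: ifP => E; last first.
      by rewrite addr_ge0 // mulr_ge0 // expR_ge0.
    rewrite -mulrDr -{1}(mulr1 (weight lambda w)) ler_wpM2l //.
    move: E; rewrite out_eq // normrM (gtr0_norm c0) mulrC ltr_pM2l //.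
    rewrite -/(D w.1).
    have e1 := expR_ge0 (r * D w.1 - r * t).
    have e2 := expR_ge0 (- r * D w.1 - r * t).
    case: (lerP 0 (D w.1)) => hD.
      rewrite ger0_norm // => E.
      have := expR_ge1Dx (r * D w.1 - r * t).
      have : 0 <= r * D w.1 - r * t by rewrite -mulrBr mulr_ge0 // subr_ge0 ltW.
      lra.
    rewrite ltr0_norm // => E.
    have := expR_ge1Dx (- r * D w.1 - r * t).
    have : 0 <= - r * D w.1 - r * t.
      by rewrite mulNr -mulrN -mulrBr mulr_ge0 // subr_ge0 ltW.
    lra.
  rewrite big_split /=.
  apply: lerD.
    by apply: one_side => //; apply/andP; split; lra.
  by apply: one_side => //; apply/andP; split; lra.
rewrite -/t -/c.
have [Lle0|Lgt0] := lerP L 0.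
  apply: le_trans (key 0 ltac:(apply/andP; split; lra)) _.
  rewrite sqrrN expr0n /= mulr0 mul0r oppr0 expR0 !mul1r.
  have : 2 / beta <= 1.
    rewrite leNgt; apply/negP => h.
    have := ln_gt0 h; rewrite -/L; lra.
  rewrite ler_pdivrMr // mul1r => h; apply: le_trans h; by rewrite -mulr2n.
have hL2 : 2 * L <= lambda by exact: hL.
have lpos : 0 < lambda by lra.
pose r := Num.sqrt (2 * L / lambda).
have r0 : 0 <= r by apply: sqrtr_ge0.
have rr : r ^+ 2 = 2 * L / lambda by rewrite sqr_sqrtr // divr_ge0 //; lra.
have r1 : r <= 1.
  rewrite -sqrtr1 ler_sqrt ?ler01 //.
  by rewrite ler_pdivrMr // mul1r.
apply: le_trans (key r ltac:(apply/andP; split => //)) _.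
have rt : r * t = 2 * L.
  rewrite /r /t -sqrtrM; last by rewrite divr_ge0 //; lra.
  have -> : 2 * L / lambda * (2 * lambda * L) = (2 * L) ^+ 2.
    by field; rewrite gt_eqF.
  by rewrite sqrtr_sqr ger0_norm //; lra.
rewrite sqrrN rr rt.
have -> : lambda / 2 * (2 * L / lambda) = L by field; rewrite gt_eqF.
rewrite -expRD.
have -> : - (2 * L) + L = - L by ring.
rewrite expRN /L lnK ?posrE ?divr_gt0 //.
rewrite invf_div.
have -> : beta / 2 + beta / 2 = beta by field.
by [].
Qed.
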